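(* Let $G\subset GL(V)$ be a reflection group and let $g\in G$ with $\ell(g)=\operatorname{codim}(g)$. If $h\in G$ satisfies $h\le_\ell g$, then $h\le_\perp g$.
   Context: $V$ is a finite-dimensional vector space of dimension $n$ over $\mathbb{R}$ or $\mathbb{C}$. A reflection is an element of $GL(V)$ of finite order fixing a hyperplane pointwise; a reflection group is a finite subgroup of $GL(V)$ generated by reflections. $\ell(g)$ is the minimal number of reflections of $G$ whose product is $g$ ($\ell(1)=0$). $\operatorname{codim}(g)=n-\dim\{v\in V:gv=v\}$. The reflection length order: $a\le_\ell c$ iff $\ell(a)+\ell(a^{-1}c)=\ell(c)$. The codimension order: $a\le_\perp c$ iff $\operatorname{codim}(a)+\operatorname{codim}(a^{-1}c)=\operatorname{codim}(c)$. *)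

(* Defs.v *)
From mathcomp Require Import all_boot all_algebra.
From mathcomp Require Import boolp reals.
From mathcomp.real_closed Require Import complex.
Set Implicit Arguments. Unset Strict Implicit. Unset Printing Implicit Defensive.
Import GRing.Theory.
Local Open Scope ring_scope.

Definition scal (R : realType) (b : bool) : fieldType :=
  if b then (R : fieldType) else (R[i] : fieldType).

Section ReflGroups.
Variables (F : fieldType) (n : nat).
(* V = row vectors 'rV[F]_n; elements of GL(V) are invertible n x n matrices
   acting on the right: v |-> v *m g. The group law is matrix product. *)

Definition mxprod (s : seq 'M[F]_n) : 'M[F]_n := foldr mulmx 1%:M s.

Definition fixspace (g : 'M[F]_n) : 'M[F]_n := kermx (g - 1%:M).

Definition codim (g : 'M[F]_n) : nat := (n - \rank (fixspace g))%N.

Definition is_reflection (r : 'M[F]_n) : Prop :=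
  [/\ r \in unitmx,
      exists2 k : nat, (0 < k)%N & r ^+ k = 1%:M,
      r != 1%:M &
      exists H : 'M[F]_n, \rank H = n.-1 /\ (H <= fixspace r)%MS].

(* G (given by the finite list of its elements) is a finite subgroup of
   GL(V) generated by reflections (in a finite group every element of the
   generated subgroup is a product of generators). *)
Definition is_refl_group (G : seq 'M[F]_n) : Prop :=
  [/\ forall g, g \in G -> g \in unitmx,
      1%:M \in G,
      forall a b, a \in G -> b \in G -> a *m b \in G,
      forall a, a \in G -> invmx a \in G &
      forall g, g \in G -> exists s : seq 'M[F]_n,
        (forall r, r \in s -> r \in G /\ is_reflection r) /\ g = mxprod s].

Definition reflprod (G : seq 'M[F]_n) (g : 'M[F]_n) (k : nat) : Prop :=
  exists s : seq 'M[F]_n,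
    [/\ size s = k, (forall r, r \in s -> r \in G /\ is_reflection r)
      & g = mxprod s].

Lemma reflprod_asbool (G : seq 'M[F]_n) g :
  (exists k, reflprod G g k) -> exists k, `[< reflprod G g k >].
Proof. by case=> k h; exists k; apply/asboolP. Qed.

(* reflection length: minimal number of reflections of G with product g
   (0 if g is not such a product; never happens for g in G) *)
Definition rlen (G : seq 'M[F]_n) (g : 'M[F]_n) : nat :=
  match pselect (exists k, reflprod G g k) with
  | left h => ex_minn (reflprod_asbool h)
  | right _ => 0%N
  end.

Definition le_refl (G : seq 'M[F]_n) (a c : 'M[F]_n) : Prop :=
  (rlen G a + rlen G (invmx a *m c))%N = rlen G c.

Definition le_codim (a c : 'M[F]_n) : Prop :=
  (codim a + codim (invmx a *m c))%N = codim c.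

End ReflGroups.

(* Main.v *)
Require Import Defs.
From mathcomp Require Import all_boot all_algebra.
From mathcomp Require Import boolp reals.
From mathcomp.real_closed Require Import complex.
From mathcomp Require Import zify.
Import GRing.Theory.
Local Open Scope ring_scope.

Section Aux.
Variables (F : fieldType) (n : nat).

Lemma fix_mulE (A C : 'M[F]_n) : (C <= fixspace A)%MS -> C *m A = C.
Proof.
move/sub_kermxP; rewrite mulmxBr mulmx1 => /eqP; rewrite subr_eq0 => /eqP//.
Qed.

Lemma codim_mul (A B : 'M[F]_n) : (codim (A *m B) <= codim A + codim B)%N.
Proof.
rewrite /codim.
set C := (fixspace A :&: fixspace B)%MS.
have hC : (C <= fixspace (A *m B))%MS.
  apply/sub_kermxP; rewrite mulmxBr mulmx1 mulmxA.
  rewrite (fix_mulE _ _ (capmxSl _ _)) (fix_mulE _ _ (capmxSr _ _)) subrr //.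
have r1 := mxrankS hC.
have r2 := mxrank_sum_cap (fixspace A) (fixspace B).
have r3 := rank_leq_col (fixspace A + fixspace B)%MS.
have r4 := rank_leq_col (fixspace A).
have r5 := rank_leq_col (fixspace B).
rewrite -/C in r2. lia.
Qed.

Lemma codim1 : codim (1%:M : 'M[F]_n) = 0%N.
Proof.
rewrite /codim; apply/eqP; rewrite subn_eq0.
have h : ((1%:M : 'M[F]_n) <= fixspace 1%:M)%MS.
  by apply/sub_kermxP; rewrite subrr mulmx0.
by have := mxrankS h; rewrite mxrank1.
Qed.

Lemma codim_refl (r : 'M[F]_n) : is_reflection r -> (codim r <= 1)%N.
Proof.
case=> _ _ _ [H [rH sH]].
have := mxrankS sH; rewrite rH /codim => h; lia.
Qed.

Lemma codim_prod (G : seq 'M[F]_n) s :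
  (forall r, r \in s -> r \in G /\ is_reflection r) ->
  (codim (mxprod s) <= size s)%N.
Proof.
elim: s => [|r s IH] hs /=; first by rewrite /mxprod /= codim1.
have [_ hr] := hs r (mem_head _ _).
have := codim_refl _ hr.
have := IH (fun x hx => hs x (mem_behead (s:=r::s) hx)).
have := codim_mul r (mxprod (F:=F) s).
rewrite /mxprod /= => ???; lia.
Qed.

Lemma rlen_spec (G : seq 'M[F]_n) g :
  (exists k, reflprod G g k) -> reflprod G g (rlen G g).
Proof.
move=> ex; rewrite /rlen; case: pselect => [h|//].
by case: ex_minnP => m /asboolP.
Qed.

Lemma codim_rlen (G : seq 'M[F]_n) g :
  is_refl_group G -> g \in G -> (codim g <= rlen G g)%N.
Proof.
case=> _ _ _ _ hgen hg.
have ex : exists k, reflprod G g k.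
  by have [s [hs ->]] := hgen g hg; exists (size s), s.
have [s [<- hs ->]] := rlen_spec _ _ ex.
exact: codim_prod _ _ hs.
Qed.

End Aux.

Theorem mainTheorem3 (R : realType) (b : bool) (n : nat)
    (G : seq 'M[scal R b]_n) :
  is_refl_group G ->
  forall g : 'M[scal R b]_n, g \in G -> rlen G g = codim g ->
  forall h : 'M[scal R b]_n, h \in G -> le_refl G h g -> le_codim h g.
Proof.
move=> hG g hg eg h hh; rewrite /le_refl /le_codim => hl.
have hG' := hG; case: hG' => hunit _ hmul hinv _.
have hhg : invmx h *m g \in G by apply: hmul => //; apply: hinv.
have c1 := @codim_rlen _ _ G h hG hh.
have c2 := @codim_rlen _ _ G _ hG hhg.
have c3 := @codim_mul _ _ h (invmx h *m g).
have e : h *m (invmx h *m g) = g := mulKVmx (hunit h hh) g.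
rewrite e in c3.
move: c1 c2 c3 hl eg.
move: (codim h) (codim (invmx h *m g)) (codim g) (rlen G h) (rlen G (invmx h *m g)) (rlen G g).
move=> x1 x2 x3 y1 y2 y3; lia.
Qed.
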